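(* Let $k,l$ be positive integers and let $\widehat{\mathfrak{G}}_{k,l}$ be the groupoid defined below. Then $\widehat{\mathfrak{G}}_{k,l}$ is (isomorphic to) the action groupoid $\mathrm{Gr}_{k,l}\rtimes\mathrm{PU}(kl)$ associated with the action of $\mathrm{PU}(kl)$ on $\mathrm{Gr}_{k,l}$ (by automorphisms of $M_{kl}(\mathbb{C})$ moving subalgebras).
   Context: $\mathrm{Gr}_{k,l}$ is the space of unital $*$-subalgebras of $M_{kl}(\mathbb{C})$ isomorphic to $M_k(\mathbb{C})$. For $\alpha\in\mathrm{Gr}_{k,l}$ write $M_{k,\alpha}$ for the subalgebra and $M_{l,\alpha}\cong M_l(\mathbb{C})$ for its centralizer in $M_{kl}(\mathbb{C})$. The topological groupoid $\widehat{\mathfrak{G}}_{k,l}$ has object space $\mathrm{Gr}_{k,l}$, and a morphism from $\alpha$ to $\beta$ is a pair $(\lambda,\mu)$ of $*$-isomorphisms $\lambda\colon M_{k,\alpha}\to M_{k,\beta}$, $\mu\colon M_{l,\alpha}\to M_{l,\beta}$, with the natural topology. The action groupoid of a group $G$ acting on $Y$ has objects $Y$ and morphisms $G\times Y$, with $s(g,y)=y$, $t(g,y)=gy$. *)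

(* Defs.v *)
From HB Require Import structures.
From mathcomp Require Import all_boot all_order all_algebra.
From mathcomp Require Import all_classical all_reals topology normedtype.
From mathcomp Require Import complex.
Import Order.TTheory GRing.Theory Num.Theory.
Import numFieldTopology.Exports numFieldNormedType.Exports.
Set Implicit Arguments.
Unset Strict Implicit.
Unset Printing Implicit Defensive.
Local Open Scope classical_set_scope.
Local Open Scope ring_scope.

(** The complex numbers are modelled as R[i] for R : realType (any realType is
    the real line up to isomorphism), with its norm (modulus) topology. *)
Definition Cx (R : realType) : numClosedFieldType := R[i].

Definition adjmx (C : numClosedFieldType) (m p : nat) (x : 'M[C]_(m, p)) : 'M[C]_(p, m) :=
  (map_mx Num.conj x)^T.

(** Linear endomorphisms of M_n(C) are represented by matrices E of size
    (n*n) x (n*n) acting on the vectorisation: x |-> vec_mx (mxvec x *m E).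
    Thus app (E1 *m E2) = app E2 \o app E1. *)
Definition app (C : numClosedFieldType) (n : nat) (E : 'M[C]_(n * n)) (x : 'M[C]_n) : 'M[C]_n :=
  vec_mx (mxvec x *m E).

Definition is_unital_star_subalgebra (C : numClosedFieldType) (n : nat) (A : set 'M[C]_n) : Prop :=
  [/\ A 1%:M,
      (forall x y, A x -> A y -> A (x + y)),
      (forall (c : C) x, A x -> A (c *: x)),
      (forall x y, A x -> A y -> A (x *m y)) &
      (forall x, A x -> A (adjmx x))].

Definition is_star_iso (C : numClosedFieldType) (m n : nat)
  (A : set 'M[C]_m) (B : set 'M[C]_n) (f : 'M[C]_m -> 'M[C]_n) : Prop :=
  [/\ set_bij A B f,
      (forall x y, A x -> A y -> f (x + y) = f x + f y),
      (forall (c : C) x, A x -> f (c *: x) = c *: f x),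
      (forall x y, A x -> A y -> f (x *m y) = f x *m f y) &
      (forall x, A x -> f (adjmx x) = adjmx (f x))].

Definition centralizer (C : numClosedFieldType) (n : nat) (A : set 'M[C]_n) : set 'M[C]_n :=
  [set y | forall x, A x -> x *m y = y *m x].

Definition hs (C : numClosedFieldType) (n : nat) (x y : 'M[C]_n) : C := \tr (adjmx x *m y).

Definition is_orth_proj (C : numClosedFieldType) (n : nat) (A : set 'M[C]_n) (P : 'M[C]_(n * n)) : Prop :=
  (forall x, A (app P x)) /\ (forall x y, A y -> hs (x - app P x) y = 0).

Definition orth_proj (C : numClosedFieldType) (n : nat) (A : set 'M[C]_n) : 'M[C]_(n * n) :=
  xget 0 (is_orth_proj A).

(** The space of subalgebras with its natural (Grassmannian) topology: the
    initial topology of alpha |-> orthogonal projection onto alpha. *)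
Definition Obj (R : realType) (n : nat) := initial_topology (@orth_proj (Cx R) n).
Arguments Obj : clear implicits.

Definition Gr (R : realType) (k l : nat) : set (Obj R (k * l)) :=
  [set A : set 'M[Cx R]_(k * l) | is_unital_star_subalgebra A /\
           exists f : 'M[Cx R]_k -> 'M[Cx R]_(k * l), is_star_iso setT A f].

Arguments Gr : clear implicits.

(** PU(n), realised faithfully as the group {Ad u | u in U(n)} of (inner)
    automorphisms of M_n(C), with the topology of End(M_n(C)).  The group law
    g * h (first h, then g) is the matrix product h *m g. *)
Definition PU (R : realType) (n : nat) : set 'M[Cx R]_(n * n) :=
  [set g | exists u : 'M[Cx R]_n,
     [/\ u *m adjmx u = 1%:M, adjmx u *m u = 1%:M &
         forall x, app g x = u *m x *m adjmx u]].

Arguments PU : clear implicits.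

Definition pu_mul (C : numClosedFieldType) (n : nat) (g h : 'M[C]_(n * n)) : 'M[C]_(n * n) :=
  h *m g.

Definition pu_act (R : realType) (n : nat) (g : 'M[Cx R]_(n * n)) (A : Obj R n) : Obj R n :=
  app g @` (A : set 'M[Cx R]_n).

(** A morphism alpha -> beta is recorded as
    (alpha, beta, L, M) where the *-isomorphism lambda : M_{k,alpha} -> M_{k,beta}
    is app L restricted to alpha, and mu : M_{l,alpha} -> M_{l,beta} is app M
    restricted to the centralizer of alpha.  To make the representation
    unique, L (resp. M) is normalised to vanish on the orthogonal complement
    of alpha (resp. of its centralizer), i.e. L = lambda o P_alpha.  The
    topology is the product topology (natural topology). *)
Definition MorT (R : realType) (n : nat) :=
  (Obj R n * Obj R n * 'M[Cx R]_(n * n) * 'M[Cx R]_(n * n))%type.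
Arguments MorT : clear implicits.

Definition mor_src (R : realType) (n : nat) (m : MorT R n) : Obj R n := m.1.1.1.
Definition mor_tgt (R : realType) (n : nat) (m : MorT R n) : Obj R n := m.1.1.2.

Definition HatMor (R : realType) (k l : nat) : set (MorT R (k * l)) :=
  [set m | let: (A, B, L, M) := m in
     [/\ Gr R k l A, Gr R k l B,
         is_star_iso A B (app L),
         is_star_iso (centralizer A) (centralizer B) (app M) &
         (forall x, app L x = app L (app (orth_proj A) x)) /\
         (forall x, app M x = app M (app (orth_proj (centralizer A)) x))]].

Arguments HatMor : clear implicits.

(** composition in hat-G: m2 o m1 (first m1 : alpha -> beta, then m2 : beta -> gamma) *)
Definition hat_comp (R : realType) (n : nat) (m2 m1 : MorT R n) : MorT R n :=
  (mor_src m1, mor_tgt m2, m1.1.2 *m m2.1.2, m1.2 *m m2.2).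

(* Main.v *)
Require Import Defs.
From HB Require Import structures.
From mathcomp Require Import all_boot all_order all_algebra.
From mathcomp Require Import all_classical all_reals topology normedtype.
From mathcomp Require Import complex.
Import Order.TTheory GRing.Theory Num.Theory.
Import numFieldTopology.Exports numFieldNormedType.Exports.
Local Open Scope classical_set_scope.
Local Open Scope ring_scope.
Set Implicit Arguments.
Unset Strict Implicit.
Unset Printing Implicit Defensive.

Section Gen.
Variable C : numClosedFieldType.

Lemma lin_sum (U V : lmodType C) (h : U -> V) (hl : linear h) I r (P : pred I) (F : I -> U) :
  h (\sum_(i <- r | P i) F i) = \sum_(i <- r | P i) h (F i).
Proof.
pose f : {linear U -> V} := HB.pack h (GRing.isLinear.Build _ _ _ _ h hl).
exact: (raddf_sum f).
Qed.

Lemma linZ (U V : lmodType C) (h : U -> V) (hl : linear h) c x : h (c *: x) = c *: h x.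
Proof.
pose f : {linear U -> V} := HB.pack h (GRing.isLinear.Build _ _ _ _ h hl).
exact: (linearZZ f).
Qed.

Lemma linD (U V : lmodType C) (h : U -> V) (hl : linear h) x y : h (x + y) = h x + h y.
Proof.
pose f : {linear U -> V} := HB.pack h (GRing.isLinear.Build _ _ _ _ h hl).
exact: (linearD f).
Qed.

Lemma lin0 (U V : lmodType C) (h : U -> V) (hl : linear h) : h 0 = 0.
Proof.
pose f : {linear U -> V} := HB.pack h (GRing.isLinear.Build _ _ _ _ h hl).
exact: (linear0 f).
Qed.

Lemma linB (U V : lmodType C) (h : U -> V) (hl : linear h) x y : h (x - y) = h x - h y.
Proof.
pose f : {linear U -> V} := HB.pack h (GRing.isLinear.Build _ _ _ _ h hl).
exact: (linearB f).
Qed.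

Lemma linN (U V : lmodType C) (h : U -> V) (hl : linear h) x : h (- x) = - h x.
Proof.
pose f : {linear U -> V} := HB.pack h (GRing.isLinear.Build _ _ _ _ h hl).
exact: (linearN f).
Qed.

Variable n : nat.
Local Notation M := 'M[C]_n.
Local Notation E := 'M[C]_(n * n).

Lemma app_lin (P : E) : linear (app P).
Proof.
by move=> c x y; rewrite /app linearP /= mulmxDl -scalemxAl linearP.
Qed.

Lemma app_mul (P Q : E) x : app (P *m Q) x = app Q (app P x).
Proof. by rewrite /app vec_mxK mulmxA. Qed.

Lemma app1 x : app (1%:M : E) x = x.
Proof. by rewrite /app mulmx1 mxvecK. Qed.

Lemma app_inj (P Q : E) : (forall x, app P x = app Q x) -> P = Q.
Proof.
move=> h; apply/row_matrixP => i.
have := h (vec_mx (delta_mx 0 i)); rewrite /app vec_mxK => /(can_inj vec_mxK).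
by rewrite !rowE.
Qed.

Definition Mat (h : M -> M) : E := lin_mx h.

Lemma app_Mat (h : M -> M) : linear h -> forall x, app (Mat h) x = h x.
Proof.
move=> hl x.
pose f : {linear M -> M} := HB.pack h (GRing.isLinear.Build _ _ _ _ h hl).
exact: (mx_vec_lin f).
Qed.

Lemma adjmxE m p (x : 'M[C]_(m, p)) i j : adjmx x i j = (x j i)^*.
Proof. by rewrite /adjmx !mxE. Qed.

Lemma adjmxK m p (x : 'M[C]_(m, p)) : adjmx (adjmx x) = x.
Proof. by apply/matrixP => i j; rewrite !adjmxE conjCK. Qed.

Lemma adjmxD m p (x y : 'M[C]_(m, p)) : adjmx (x + y) = adjmx x + adjmx y.
Proof. by apply/matrixP => i j; rewrite !mxE rmorphD. Qed.

Lemma adjmxZ m p c (x : 'M[C]_(m, p)) : adjmx (c *: x) = c^* *: adjmx x.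
Proof. by apply/matrixP => i j; rewrite !mxE rmorphM. Qed.

Lemma adjmx0 m p : adjmx (0 : 'M[C]_(m, p)) = 0.
Proof. by apply/matrixP => i j; rewrite !mxE rmorph0. Qed.

Lemma adjmxN m p (x : 'M[C]_(m, p)) : adjmx (- x) = - adjmx x.
Proof. by apply/matrixP => i j; rewrite !mxE rmorphN. Qed.

Lemma adjmxB m p (x y : 'M[C]_(m, p)) : adjmx (x - y) = adjmx x - adjmx y.
Proof. by rewrite adjmxD adjmxN. Qed.

Lemma adjmx_sum m p I r (P : pred I) (F : I -> 'M[C]_(m, p)) :
  adjmx (\sum_(i <- r | P i) F i) = \sum_(i <- r | P i) adjmx (F i).
Proof. by elim/big_rec2: _ => [|i a b _ <-]; rewrite ?adjmx0 ?adjmxD. Qed.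

Lemma adjmxM m p q (x : 'M[C]_(m, p)) (y : 'M[C]_(p, q)) :
  adjmx (x *m y) = adjmx y *m adjmx x.
Proof.
apply/matrixP => i j; rewrite adjmxE !mxE rmorph_sum; apply: eq_bigr => s _.
by rewrite !adjmxE rmorphM mulrC.
Qed.

Lemma adjmx1 m : adjmx (1%:M : 'M[C]_m) = 1%:M.
Proof.
by apply/matrixP => i j; rewrite adjmxE !mxE eq_sym; case: eqP; rewrite ?rmorph1 ?rmorph0.
Qed.

Lemma adjmx_delta m p (i : 'I_m) (j : 'I_p) : adjmx (delta_mx i j : 'M[C]_(m, p)) = delta_mx j i.
Proof.
apply/matrixP => a b; rewrite adjmxE !mxE.
by case: (a == j); case: (b == i); rewrite /= ?rmorph1 ?rmorph0.
Qed.

Lemma tr_adj (x : M) : \tr (adjmx x) = (\tr x)^*.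
Proof. by rewrite /mxtrace rmorph_sum; apply: eq_bigr => i _; rewrite adjmxE. Qed.

Lemma hsE (x y : M) : hs x y = \sum_a \sum_b (x a b)^* * y a b.
Proof.
rewrite /hs /mxtrace exchange_big; apply: eq_bigr => b _; rewrite mxE.
by apply: eq_bigr => a _; rewrite adjmxE.
Qed.

Lemma hsC (x y : M) : hs y x = (hs x y)^*.
Proof.
rewrite !hsE rmorph_sum; apply: eq_bigr => a _; rewrite rmorph_sum.
by apply: eq_bigr => b _; rewrite rmorphM /= conjCK mulrC.
Qed.

Lemma hs_linr (x : M) : linear (hs x).
Proof. by move=> c y z; rewrite /hs mulmxDr -scalemxAr mxtraceD mxtraceZ. Qed.

Lemma hsDl (x y z : M) : hs (x + y) z = hs x z + hs y z.
Proof. by rewrite /hs adjmxD mulmxDl mxtraceD. Qed.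

Lemma hsZl c (x z : M) : hs (c *: x) z = c^* * hs x z.
Proof. by rewrite /hs adjmxZ -scalemxAl mxtraceZ. Qed.

Lemma hsNl (x z : M) : hs (- x) z = - hs x z.
Proof. by rewrite /hs adjmxN mulNmx raddfN. Qed.

Lemma hsBl (x y z : M) : hs (x - y) z = hs x z - hs y z.
Proof. by rewrite hsDl hsNl. Qed.

Lemma hs_suml I r (P : pred I) (F : I -> M) z :
  hs (\sum_(i <- r | P i) F i) z = \sum_(i <- r | P i) hs (F i) z.
Proof.
elim/big_rec2: _ => [|i a b _ <-]; last by rewrite hsDl.
by rewrite /hs adjmx0 mul0mx mxtrace0.
Qed.

Lemma hs_delta (x : M) a b : hs x (delta_mx a b) = (x a b)^*.
Proof.
rewrite hsE (bigD1 a) //= [X in _ + X]big1 ?addr0; last first.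
  by move=> a' na; apply: big1 => b' _; rewrite mxE (negbTE na) /= ?mulr0n ?mulr0.
rewrite (bigD1 b) //= [X in _ + X]big1 ?addr0; last first.
  by move=> b' nb; rewrite mxE (negbTE nb) andbF /= ?mulr0n ?mulr0.
by rewrite mxE !eqxx /= mulr1.
Qed.

Lemma hs_self_eq0 (x : M) : hs x x = 0 -> x = 0.
Proof.
rewrite hsE => h; apply/matrixP => a b; rewrite mxE.
have ge0 : forall a b, 0 <= (x a b)^* * x a b.
  by move=> ? ?; rewrite mulrC -normCK exprn_ge0.
have := psumr_eq0P (P := predT) _ h => /(_ _) h2.
have h3 : \sum_b0 (x a b0)^* * x a b0 = 0.
  apply: h2 => // a0 _; exact: sumr_ge0.
have := psumr_eq0P (P := predT) _ h3 => /(_ _) h4.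
have /eqP := h4 (fun b0 _ => ge0 a b0) b isT.
by rewrite mulrC -normCK sqrf_eq0 normr_eq0 => /eqP.
Qed.

Definition is_subspace (A : set M) := A 0 /\ (forall c x y, A x -> A y -> A (c *: x + y)).

Lemma subsp_sub (A : set M) x y : is_subspace A -> A x -> A y -> A (x - y).
Proof.
move=> [A0 AL] Ax Ay; have := AL (-1) y x Ay Ax.
by rewrite scaleN1r addrC.
Qed.

Lemma orth_proj_uniq_aux (A : set M) (P Q : E) : is_subspace A ->
  is_orth_proj A P -> is_orth_proj A Q -> P = Q.
Proof.
move=> sA [P1 P2] [Q1 Q2]; apply: app_inj => x.
set d := app P x - app Q x.
have Ad : A d by apply: subsp_sub.
have : hs d d = 0.
  have e : d = (x - app Q x) - (x - app P x).
    by rewrite /d opprB [RHS]addrC [RHS]addrA subrK.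
  by rewrite {1}e hsBl (P2 _ _ Ad) (Q2 _ _ Ad) subrr.
by move/hs_self_eq0 => /eqP; rewrite subr_eq0 => /eqP.
Qed.

Lemma orth_projE (A : set M) (P : E) : is_subspace A -> is_orth_proj A P -> orth_proj A = P.
Proof.
move=> sA hP; rewrite /orth_proj; apply: xget_unique => // y hy.
exact: (orth_proj_uniq_aux sA).
Qed.

Lemma orth_proj_id (A : set M) (P : E) y : is_subspace A -> is_orth_proj A P -> A y -> app P y = y.
Proof.
move=> sA [P1 P2] Ay; have Ad : A (y - app P y) by apply: subsp_sub.
have /hs_self_eq0 /eqP := P2 y _ Ad; rewrite subr_eq0 => /eqP h.
by rewrite -h.
Qed.

End Gen.

Section Helpers.
Variable V : nmodType.
Lemma sum_if1 (I : finType) (p : I) (F : I -> V) :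
  \sum_i (if i == p then F i else 0) = F p.
Proof. by rewrite -big_mkcond big_pred1_eq. Qed.
Lemma sum_if1' (I : finType) (p : I) (F : I -> V) :
  \sum_i (if p == i then F i else 0) = F p.
Proof. by rewrite -(sum_if1 p F); apply: eq_bigr => i _; rewrite eq_sym. Qed.
Lemma sum2_if (I J : finType) (p : I) (q : J) (F : I -> J -> V) :
  \sum_i \sum_j (if i == p then if j == q then F i j else 0 else 0) = F p q.
Proof.
rewrite (eq_bigr (fun i => if i == p then \sum_j (if j == q then F i j else 0) else 0)).
  by rewrite sum_if1 sum_if1.
by move=> i _; case: (i == p); rewrite // big1.
Qed.
Lemma sum2_ifl (I J : finType) (p : I) (F : I -> J -> V) :
  \sum_i \sum_j (if i == p then F i j else 0) = \sum_j F p j.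
Proof. by rewrite exchange_big; apply: eq_bigr => j _; rewrite sum_if1. Qed.
Lemma sum2_ifl' (I J : finType) (p : I) (F : I -> J -> V) :
  \sum_i \sum_j (if p == i then F i j else 0) = \sum_j F p j.
Proof. by rewrite exchange_big; apply: eq_bigr => j _; rewrite sum_if1'. Qed.
End Helpers.

Section Helpers2.
Variable C : numClosedFieldType.
Lemma ifmxl m p q b (A : 'M[C]_(m, p)) (B : 'M[C]_(p, q)) :
  (if b then A else 0) *m B = if b then A *m B else 0.
Proof. by case: b; rewrite ?mul0mx. Qed.
Lemma ifmxr m p q b (A : 'M[C]_(m, p)) (B : 'M[C]_(p, q)) :
  A *m (if b then B else 0) = if b then A *m B else 0.
Proof. by case: b; rewrite ?mulmx0. Qed.
Lemma iftr m b (A : 'M[C]_m) : \tr (if b then A else 0) = if b then \tr A else 0.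
Proof. by case: b; rewrite ?mxtrace0. Qed.
Lemma ifZ (V : lmodType C) b c (A : V) : c *: (if b then A else 0) = if b then c *: A else 0.
Proof. by case: b; rewrite ?scaler0. Qed.
Lemma ifadj m b (A : 'M[C]_m) : adjmx (if b then A else 0) = if b then adjmx A else 0.
Proof. by case: b; rewrite ?adjmx0. Qed.

Lemma centralizer_subspace n (A : set 'M[C]_n) : is_subspace (centralizer A).
Proof.
split; first by move=> x _; rewrite mulmx0 mul0mx.
move=> c x y hx hy z Az.
by rewrite mulmxDr mulmxDl -scalemxAr -scalemxAl hx // hy.
Qed.
End Helpers2.

Section Units.
Variable C : numClosedFieldType.
Variables k l : nat.
Hypotheses (hk : (0 < k)%N) (hl : (0 < l)%N).
Local Notation n := (k * l)%N.
Local Notation M := 'M[C]_n.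
Local Notation E := 'M[C]_(n * n).
Variable e : 'I_k -> 'I_k -> M.
Hypothesis eM : forall i j p q, e i j *m e p q = if j == p then e i q else 0.
Hypothesis e1 : \sum_i e i i = 1%:M.
Hypothesis eA : forall i j, adjmx (e i j) = e j i.

Definition span : set M := [set y | exists c : 'M[C]_k, y = \sum_i \sum_j c i j *: e i j].

Let i0 : 'I_k := Ordinal hk.

Lemma knz : (k%:R : C) != 0.
Proof. by rewrite pnatr_eq0 -lt0n. Qed.
Lemma lnz : (l%:R : C) != 0.
Proof. by rewrite pnatr_eq0 -lt0n. Qed.

Lemma tr_e i j : \tr (e i j) = if i == j then l%:R else 0.
Proof.
have tii : forall t, \tr (e t t) = \tr (e i0 i0).
  move=> t; have := eM t i0 i0 t; rewrite eqxx => <-.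
  by rewrite mxtrace_mulC eM eqxx.
have t00 : \tr (e i0 i0) = l%:R.
  have : \sum_i \tr (e i i) = (k * l)%:R by rewrite -raddf_sum e1 /= mxtrace1.
  under eq_bigr do rewrite tii.
  rewrite sumr_const card_ord => h; apply: (mulfI knz).
  by rewrite mulr_natl h natrM.
case: eqP => [<-|/eqP nij]; first by rewrite tii t00.
have := eM i i i j; rewrite eqxx => <-.
by rewrite mxtrace_mulC eM eq_sym (negbTE nij) mxtrace0.
Qed.

Lemma hs_e i j p q : hs (e i j) (e p q) = if (i == p) && (j == q) then l%:R else 0.
Proof.
rewrite /hs eA eM eq_sym; case: (p == i) => //=; rewrite ?mxtrace0 //.
by rewrite tr_e.
Qed.

Lemma span_subspace : is_subspace span.
Proof.
split; first by exists 0; rewrite big1 // => i _; rewrite big1 // => j _; rewrite mxE scale0r.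
move=> c x y [a ->] [b ->]; exists (c *: a + b).
rewrite scaler_sumr -big_split /=; apply: eq_bigr => i _.
rewrite scaler_sumr -big_split /=; apply: eq_bigr => j _.
by rewrite !mxE scalerDl scalerA.
Qed.

Lemma span_e p q : span (e p q).
Proof.
exists (delta_mx p q).
under eq_bigr do under eq_bigr do rewrite mxE.
rewrite (bigD1 p) //= [X in _ + X]big1 ?addr0; last first.
  by move=> i /negbTE ->; apply: big1 => j _; rewrite /= scale0r.
rewrite (bigD1 q) //= [X in _ + X]big1 ?addr0; last by move=> j /negbTE ->; rewrite andbF scale0r.
by rewrite !eqxx scale1r.
Qed.

Definition PA (x : M) : M := l%:R^-1 *: \sum_i \sum_j hs (e i j) x *: e i j.

Lemma PA_lin : linear PA.
Proof.
move=> c x y; rewrite /PA scalerA mulrC -scalerA -scalerDr; congr (_ *: _).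
rewrite scaler_sumr -big_split /=; apply: eq_bigr => i _.
rewrite scaler_sumr -big_split /=; apply: eq_bigr => j _.
by rewrite (hs_linr _ c x y) scalerDl scalerA.
Qed.

Lemma eM' m (X : 'M[C]_(m, n)) i j p q : X *m e i j *m e p q = if j == p then X *m e i q else 0.
Proof. by rewrite -mulmxA eM ifmxr. Qed.

Lemma mulr_ifr (c : C) b (X : C) : c * (if b then X else 0) = if b then c * X else 0.
Proof. by case: b; rewrite ?mulr0. Qed.

Lemma conj_invn (m : nat) : ((m%:R : C)^-1)^* = (m%:R)^-1.
Proof. by rewrite geC0_conj // invr_ge0 ler0n. Qed.

Lemma hs_PA x p q : hs (PA x) (e p q) = hs x (e p q).
Proof.
rewrite /PA hsZl hs_suml.
rewrite (eq_bigr (fun i => \sum_j if i == p then if j == q then ((hs (e i j) x)^* * l%:R) else 0 else 0)); last first.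
  move=> i _; rewrite hs_suml; apply: eq_bigr => j _; rewrite hsZl hs_e.
  by case: (i == p); case: (j == q); rewrite /= ?mulr0.
rewrite sum2_if -hsC conj_invn mulrCA mulVf ?mulr1 //; exact: lnz.
Qed.

Lemma PA_orth : is_orth_proj span (Mat PA).
Proof.
split=> [x|x y [c ->]]; rewrite app_Mat; try exact: PA_lin.
  exists (\matrix_(i, j) (l%:R^-1 * hs (e i j) x)); rewrite /PA scaler_sumr.
  apply: eq_bigr => i _; rewrite scaler_sumr; apply: eq_bigr => j _.
  by rewrite mxE scalerA.
rewrite (lin_sum (hs_linr _)) big1 // => i _; rewrite (lin_sum (hs_linr _)) big1 // => j _.
by rewrite (linZ (hs_linr _)) hsBl hs_PA subrr scaler0.
Qed.

Lemma orth_proj_span : orth_proj span = Mat PA.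
Proof. exact: orth_projE span_subspace PA_orth. Qed.

Lemma cent_iff y : centralizer span y <-> forall i j, e i j *m y = y *m e i j.
Proof.
split=> [H i j|H x [c ->]]; first exact: H (span_e i j).
rewrite mulmx_suml mulmx_sumr; apply: eq_bigr => i _.
rewrite mulmx_suml mulmx_sumr; apply: eq_bigr => j _.
by rewrite -scalemxAl -scalemxAr H.
Qed.

Definition EA (x : M) : M := k%:R^-1 *: \sum_i \sum_j e i j *m x *m e j i.

Lemma EA_lin : linear EA.
Proof.
move=> c x y; rewrite /EA scalerA mulrC -scalerA -scalerDr; congr (_ *: _).
rewrite scaler_sumr -big_split /=; apply: eq_bigr => i _.
rewrite scaler_sumr -big_split /=; apply: eq_bigr => j _.
by rewrite mulmxDr mulmxDl -scalemxAr -scalemxAl.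
Qed.

Lemma EA_cent x : centralizer span (EA x).
Proof.
apply/cent_iff => p q; rewrite /EA -scalemxAl -scalemxAr; congr (_ *: _).
rewrite mulmx_sumr mulmx_suml.
rewrite (eq_bigr (fun i => \sum_j if q == i then e p j *m x *m e j i else 0)); last first.
  move=> i _; rewrite mulmx_sumr; apply: eq_bigr => j _.
  by rewrite !mulmxA eM !ifmxl.
rewrite sum2_ifl'.
rewrite [RHS](eq_bigr (fun i => \sum_j if i == p then e i j *m x *m e j q else 0)); last first.
  move=> i _; rewrite mulmx_suml; apply: eq_bigr => j _.
  by rewrite eM'.
by rewrite sum2_ifl.
Qed.

Lemma EA_orth : is_orth_proj (centralizer span) (Mat EA).
Proof.
split=> [x|x z /cent_iff hz]; rewrite app_Mat; try exact: EA_lin.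
  exact: EA_cent.
rewrite hsBl; apply/eqP; rewrite subr_eq0; apply/eqP.
rewrite /EA hsZl hs_suml conj_invn.
rewrite (eq_bigr (fun i : 'I_k => hs x z)); last first.
  move=> i _; rewrite hs_suml.
  rewrite (eq_bigr (fun j : 'I_k => \tr (e j j *m (adjmx x *m z)))); last first.
    move=> j _; rewrite /hs !adjmxM !eA !mulmxA -(mulmxA _ (e j i) z) hz !mulmxA.
    by rewrite mxtrace_mulC !mulmxA eM eqxx.
  by rewrite -raddf_sum /= -mulmx_suml e1 mul1mx.
rewrite sumr_const card_ord -[hs x z *+ k]mulr_natl mulrA mulVf ?mul1r //; exact: knz.
Qed.

Lemma orth_proj_cent : orth_proj (centralizer span) = Mat EA.
Proof. exact: orth_projE (centralizer_subspace _) EA_orth. Qed.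

Definition xc i j (x : M) : M := \sum_m e m i *m x *m e j m.

Lemma xc_lin i j : linear (xc i j).
Proof.
move=> c x y; rewrite /xc scaler_sumr -big_split /=; apply: eq_bigr => m _.
by rewrite mulmxDr mulmxDl -scalemxAr -scalemxAl.
Qed.

Lemma xc_cent i j x : centralizer span (xc i j x).
Proof.
apply/cent_iff => p q; rewrite /xc mulmx_sumr mulmx_suml.
rewrite (eq_bigr (fun m => if q == m then e p i *m x *m e j m else 0)) => [|m _]; last first.
  by rewrite !mulmxA eM !ifmxl.
rewrite sum_if1'.
rewrite [RHS](eq_bigr (fun m => if m == p then e m i *m x *m e j q else 0)) => [|m _].
  by rewrite sum_if1.
by rewrite eM'.
Qed.

Lemma decomp x : \sum_i \sum_j e i j *m xc i j x = x.
Proof.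
rewrite (eq_bigr (fun i => e i i *m x *m \sum_j e j j)) => [|i _]; last first.
  rewrite mulmx_sumr; apply: eq_bigr => j _.
  rewrite /xc mulmx_sumr (eq_bigr (fun m => if j == m then e i i *m x *m e j m else 0)) => [|m _].
    by rewrite sum_if1'.
  by rewrite !mulmxA eM !ifmxl.
by under eq_bigr do rewrite e1 mulmx1; rewrite -mulmx_suml e1 mul1mx.
Qed.

Lemma xc_mul i j x y : xc i j (x *m y) = \sum_p xc i p x *m xc p j y.
Proof.
rewrite [RHS](eq_bigr (fun p => \sum_m e m i *m x *m e p p *m y *m e j m)) => [|p _]; last first.
  rewrite /xc mulmx_suml; apply: eq_bigr => m _; rewrite mulmx_sumr.
  rewrite (eq_bigr (fun m' => if m == m' then e m i *m x *m e p p *m y *m e j m' else 0)) => [|m' _].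
    by rewrite sum_if1'.
  by rewrite !mulmxA eM' !ifmxl.
rewrite exchange_big; apply: eq_bigr => m _.
by rewrite -mulmx_suml -mulmx_suml -mulmx_sumr e1 mulmx1 !mulmxA.
Qed.

Lemma xc_adj i j x : xc i j (adjmx x) = adjmx (xc j i x).
Proof.
by rewrite /xc adjmx_sum; apply: eq_bigr => m _; rewrite !adjmxM !eA !mulmxA.
Qed.

Lemma xc_e i j p q : xc i j (e p q) = if (i == p) && (j == q) then 1%:M else 0.
Proof.
rewrite /xc; case: (i =P p) => [<-|/eqP nip] /=; last first.
  by rewrite big1 // => m _; rewrite eM (negbTE nip) mul0mx.
case: (j =P q) => [<-|/eqP njq] /=.
  by under eq_bigr do rewrite eM eqxx eM eqxx; rewrite e1.
by rewrite big1 // => m _; rewrite eM eqxx eM eq_sym (negbTE njq).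
Qed.

Lemma xc_cent_elem i j z : centralizer span z -> xc i j z = if i == j then z else 0.
Proof.
move/cent_iff=> hz; rewrite /xc.
under eq_bigr do rewrite hz -mulmxA eM ifmxr.
case: eqP => _; last by rewrite big1.
by rewrite -mulmx_sumr e1 mulmx1.
Qed.

Lemma EA_e i j x : EA (e j i *m x) = k%:R^-1 *: xc i j x.
Proof.
rewrite /EA /xc; congr (_ *: _); apply: eq_bigr => p _.
rewrite (eq_bigr (fun q => if q == j then e p i *m x *m e q p else 0)) => [|q _].
  by rewrite sum_if1.
by rewrite !mulmxA eM !ifmxl.
Qed.

Lemma PA_delta a b : PA (delta_mx a b) =
  \sum_(Y : 'I_k * 'I_k) (l%:R^-1 * (e Y.1 Y.2 a b)^*) *: e Y.1 Y.2.
Proof.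
rewrite /PA -(pair_bigA _ (fun i j => (l%:R^-1 * (e i j a b)^*) *: e i j)) /=.
rewrite scaler_sumr; apply: eq_bigr => i _; rewrite scaler_sumr; apply: eq_bigr => j _.
by rewrite hs_delta scalerA.
Qed.

Lemma adjPA_delta a b : adjmx (PA (delta_mx a b)) =
  \sum_(Z : 'I_k * 'I_k) (l%:R^-1 * e Z.1 Z.2 a b) *: e Z.2 Z.1.
Proof.
rewrite PA_delta adjmx_sum; apply: eq_bigr => Z _.
by rewrite adjmxZ eA rmorphM /= conj_invn conjCK.
Qed.

Lemma S_identity (V : lmodType C) (F : M -> M -> V)
  (F1 : forall z, linear (F ^~ z)) (F2 : forall y, linear (F y)) :
  \sum_i \sum_j F (e i j) (e j i) =
  l%:R *: \sum_a \sum_b F (PA (delta_mx a b)) (adjmx (PA (delta_mx a b))).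
Proof.
have step : forall a b, F (PA (delta_mx a b)) (adjmx (PA (delta_mx a b))) =
  \sum_(Y : 'I_k * 'I_k) \sum_(Z : 'I_k * 'I_k)
    ((l%:R^-1 * (e Y.1 Y.2 a b)^*) * (l%:R^-1 * e Z.1 Z.2 a b)) *: F (e Y.1 Y.2) (e Z.2 Z.1).
  move=> a b; rewrite adjPA_delta PA_delta (lin_sum (F1 _)); apply: eq_bigr => Y _.
  rewrite (linZ (F1 _)) (lin_sum (F2 _)) scaler_sumr; apply: eq_bigr => Z _.
  by rewrite (linZ (F2 _)) scalerA.
have h2 : \sum_a \sum_b F (PA (delta_mx a b)) (adjmx (PA (delta_mx a b))) =
  \sum_(Y : 'I_k * 'I_k) \sum_(Z : 'I_k * 'I_k)
    (l%:R^-1 * l%:R^-1 * hs (e Y.1 Y.2) (e Z.1 Z.2)) *: F (e Y.1 Y.2) (e Z.2 Z.1).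
  under eq_bigr do under eq_bigr do rewrite step.
  rewrite pair_bigA /= exchange_big; apply: eq_bigr => Y _.
  rewrite exchange_big; apply: eq_bigr => Z _.
  rewrite -scaler_suml; congr (_ *: _).
  rewrite hsE pair_bigA mulr_sumr; apply: eq_bigr => X _.
  by rewrite mulrACA.
rewrite h2.
rewrite (eq_bigr (fun Y : 'I_k * 'I_k => l%:R^-1 *: F (e Y.1 Y.2) (e Y.2 Y.1))) => [|Y _].
  by rewrite -scaler_sumr scalerA mulfV ?lnz // scale1r pair_bigA.
rewrite (eq_bigr (fun Z => if Y == Z then l%:R^-1 *: F (e Y.1 Y.2) (e Y.2 Y.1) else 0)) => [|Z _].
  by rewrite sum_if1'.
rewrite hs_e; case: Y Z => [i j] [p q]; rewrite xpair_eqE /=.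
case: (i =P p) => [<-|_]; case: (j =P q) => [<-|_] /=; rewrite ?mulr0 ?scale0r //.
by rewrite -mulrA mulVf ?mulr1 // lnz.
Qed.

End Units.

Section Bilin.
Variable C : numClosedFieldType.
Variable k : nat.

Lemma bilin_expand (V : lmodType C) (F : 'M[C]_k -> 'M[C]_k -> V)
  (F1 : forall z, linear (F ^~ z)) (F2 : forall y, linear (F y)) z w :
  F z w = \sum_(Y : 'I_k * 'I_k) \sum_(Z : 'I_k * 'I_k)
     (z Y.1 Y.2 * w Z.1 Z.2) *: F (delta_mx Y.1 Y.2) (delta_mx Z.1 Z.2).
Proof.
rewrite {1}(matrix_sum_delta z) pair_bigA (lin_sum (F1 _)); apply: eq_bigr => Y _.
rewrite (linZ (F1 _)) {1}(matrix_sum_delta w) pair_bigA (lin_sum (F2 _)) scaler_sumr.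
by apply: eq_bigr => Z _; rewrite (linZ (F2 _)) scalerA.
Qed.

Lemma lin_expand (V : lmodType C) (F : 'M[C]_k -> V) (Fl : linear F) z :
  F z = \sum_(Y : 'I_k * 'I_k) z Y.1 Y.2 *: F (delta_mx Y.1 Y.2).
Proof.
rewrite {1}(matrix_sum_delta z) pair_bigA (lin_sum Fl); apply: eq_bigr => Y _.
by rewrite (linZ Fl).
Qed.
End Bilin.

Section UnitsIso.
Variable C : numClosedFieldType.
Variables k l : nat.
Hypotheses (hk : (0 < k)%N) (hl : (0 < l)%N).
Local Notation n := (k * l)%N.
Local Notation M := 'M[C]_n.

Definition is_units (e : 'I_k -> 'I_k -> M) :=
  [/\ (forall i j p q, e i j *m e p q = if j == p then e i q else 0),
      \sum_i e i i = 1%:M & (forall i j, adjmx (e i j) = e j i)].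

Lemma star_iso_lin (A : set M) (f : 'M[C]_k -> M) :
  is_star_iso setT A f -> linear f.
Proof. by case=> _ fD fZ _ _ c x y; rewrite fD ?fZ. Qed.

Lemma units_of_iso (A : set M) f : is_unital_star_subalgebra A -> is_star_iso setT A f ->
  is_units (fun i j => f (delta_mx i j)) /\ A = span (fun i j => f (delta_mx i j)).
Proof.
move=> [A1 _ _ _ _] hf; have fl := star_iso_lin hf.
case: hf => [[ffun finj fsurj] _ _ fM fA].
have f0 : f 0 = 0 by exact: lin0 fl.
have f1 : f 1%:M = 1%:M.
  have [z _ fz] := fsurj _ A1.
  by rewrite -fz -(mul1mx z) (fM _ _ I I) fz mulmx1.
split; first split.
- move=> i j p q; rewrite -fM // mul_delta_mx_cond.
  by case: (j == p); rewrite ?mulr1n ?mulr0n.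
- by rewrite -(lin_sum fl) -mx1_sum_delta.
- by move=> i j; rewrite -fA // adjmx_delta.
- apply/seteqP; split => y.
    move=> /fsurj [z _ <-]; exists z.
    rewrite {1}(matrix_sum_delta z) (lin_sum fl); apply: eq_bigr => i _.
    by rewrite (lin_sum fl); apply: eq_bigr => j _; rewrite (linZ fl).
  case=> c ->; have <- : f c = \sum_i \sum_j c i j *: f (delta_mx i j).
    rewrite {1}(matrix_sum_delta c) (lin_sum fl); apply: eq_bigr => i _.
    by rewrite (lin_sum fl); apply: eq_bigr => j _; rewrite (linZ fl).
  exact: ffun.
Qed.


Lemma sum2_if' (V : nmodType) (I J : finType) (p : I) (q : J) (F : I -> J -> V) :
  \sum_i \sum_j (if p == i then if q == j then F i j else 0 else 0) = F p q.
Proof.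
rewrite -(sum2_if p q F); apply: eq_bigr => i _; apply: eq_bigr => j _.
by rewrite [p == i]eq_sym [q == j]eq_sym.
Qed.

Section WithUnits.
Variable e : 'I_k -> 'I_k -> M.
Hypothesis he : is_units e.
Let eM : forall i j p q, e i j *m e p q = if j == p then e i q else 0.
Proof. by case: he. Qed.
Let e1 : \sum_i e i i = 1%:M.
Proof. by case: he. Qed.
Let eA : forall i j, adjmx (e i j) = e j i.
Proof. by case: he. Qed.

Definition Fu (z : 'M[C]_k) : M := \sum_i \sum_j z i j *: e i j.

Lemma Fu_lin : linear Fu.
Proof.
move=> c x y; rewrite /Fu scaler_sumr -big_split /=; apply: eq_bigr => i _.
rewrite scaler_sumr -big_split /=; apply: eq_bigr => j _.
by rewrite !mxE scalerDl scalerA.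
Qed.

Lemma Fu_delta p q : Fu (delta_mx p q) = e p q.
Proof.
rewrite /Fu (eq_bigr (fun i => \sum_j if i == p then if j == q then e i j else 0 else 0)).
  by rewrite sum2_if.
move=> i _; apply: eq_bigr => j _; rewrite mxE.
by case: (i == p); case: (j == q); rewrite /= ?scale1r ?scale0r.
Qed.

Lemma hs_e_Fu z p q : hs (e p q) (Fu z) = z p q * l%:R.
Proof.
rewrite /Fu (lin_sum (hs_linr _)).
rewrite (eq_bigr (fun i => \sum_j if p == i then if q == j then z i j * l%:R else 0 else 0)).
  by rewrite sum2_if'.
move=> i _; rewrite (lin_sum (hs_linr _)); apply: eq_bigr => j _.
rewrite (linZ (hs_linr _)) (hs_e hk eM e1 eA).
by case: (p == i); case: (q == j); rewrite /= ?scaler0.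
Qed.

Lemma Fu_inj z w : Fu z = Fu w -> z = w.
Proof.
move=> h; apply/matrixP => p q; have := congr1 (hs (e p q)) h.
by rewrite !hs_e_Fu => /(mulIf (lnz C hl)).
Qed.

Lemma Fu_mul z w : Fu (z *m w) = Fu z *m Fu w.
Proof.
have l1 : forall w, linear ((fun z w : 'M[C]_k => Fu (z *m w)) ^~ w).
  by move=> w' c x y /=; rewrite mulmxDl -scalemxAl (Fu_lin c).
have l2 : forall z, linear ((fun z w : 'M[C]_k => Fu (z *m w)) z).
  by move=> z' c x y /=; rewrite mulmxDr -scalemxAr (Fu_lin c).
have l3 : forall w, linear ((fun z w : 'M[C]_k => Fu z *m Fu w) ^~ w).
  by move=> w' c x y /=; rewrite (Fu_lin c) mulmxDl -scalemxAl.
have l4 : forall z, linear ((fun z w : 'M[C]_k => Fu z *m Fu w) z).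
  by move=> z' c x y /=; rewrite (Fu_lin c) mulmxDr -scalemxAr.
rewrite (bilin_expand l1 l2) (bilin_expand l3 l4); apply: eq_bigr => Y _.
apply: eq_bigr => Z _; congr (_ *: _).
rewrite !Fu_delta mul_delta_mx_cond eM.
by case: (Y.2 == Z.1); rewrite ?mulr1n ?mulr0n ?Fu_delta // (lin0 Fu_lin).
Qed.

Lemma Fu_adj z : Fu (adjmx z) = adjmx (Fu z).
Proof.
rewrite /Fu adjmx_sum exchange_big; apply: eq_bigr => i _.
rewrite adjmx_sum; apply: eq_bigr => j _.
by rewrite adjmxZ eA adjmxE.
Qed.

Lemma Fu_1 : Fu 1%:M = 1%:M.
Proof.
by rewrite {1}mx1_sum_delta (lin_sum Fu_lin); under eq_bigr do rewrite Fu_delta.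
Qed.

Lemma span_Fu y : span e y <-> exists z, y = Fu z.
Proof. by []. Qed.

Lemma iso_of_units : is_unital_star_subalgebra (span e) /\ is_star_iso setT (span e) Fu.
Proof.
have [S0 SL] := span_subspace e.
split; first split.
- by exists 1%:M; exact: (esym Fu_1).
- by move=> x y Sx Sy; rewrite -(scale1r x); apply: SL.
- by move=> c x Sx; rewrite -(addr0 (c *: x)); apply: SL.
- by move=> _ _ [c ->] [d ->]; exists (c *m d); exact: (esym (Fu_mul c d)).
- by move=> _ [c ->]; exists (adjmx c); exact: (esym (Fu_adj c)).
split.
- split.
  + by move=> z _; exists z.
  + by move=> x y _ _ /Fu_inj.
  + by move=> y [z ->]; exists z.
- by move=> x y _ _; exact: (linD Fu_lin).
- by move=> c x _; exact: (linZ Fu_lin).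
- by move=> x y _ _; rewrite Fu_mul.
- by move=> x _; rewrite Fu_adj.
Qed.

End WithUnits.

Definition GrC (A : set M) := is_unital_star_subalgebra A /\
  exists f : 'M[C]_k -> M, is_star_iso setT A f.

Lemma GrC_iff A : GrC A <-> exists e, is_units e /\ A = span e.
Proof.
split.
  case=> hA [f hf]; have [hu hs] := units_of_iso hA hf.
  by exists (fun i j => f (delta_mx i j)).
case=> e [he ->]; have [h1 h2] := iso_of_units he.
by split => //; exists (Fu e).
Qed.

End UnitsIso.

Section Ad.
Variable C : numClosedFieldType.
Variable n : nat.
Local Notation M := 'M[C]_n.
Variable u : M.
Hypotheses (hu1 : u *m adjmx u = 1%:M) (hu2 : adjmx u *m u = 1%:M).

Definition ad (x : M) : M := u *m x *m adjmx u.
Definition ad' (x : M) : M := adjmx u *m x *m u.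

Lemma ad_lin : linear ad.
Proof. by move=> c x y; rewrite /ad mulmxDr mulmxDl -scalemxAr -scalemxAl. Qed.

Lemma ad_mul x y : ad (x *m y) = ad x *m ad y.
Proof. by rewrite /ad !mulmxA -[u *m x *m adjmx u *m u]mulmxA hu2 mulmx1. Qed.

Lemma ad_adj x : ad (adjmx x) = adjmx (ad x).
Proof. by rewrite /ad !adjmxM adjmxK !mulmxA. Qed.

Lemma ad1 : ad 1%:M = 1%:M.
Proof. by rewrite /ad mulmx1. Qed.

Lemma adK x : ad' (ad x) = x.
Proof. by rewrite /ad /ad' !mulmxA hu2 mul1mx -mulmxA hu2 mulmx1. Qed.

Lemma ad'K x : ad (ad' x) = x.
Proof. by rewrite /ad /ad' !mulmxA hu1 mul1mx -mulmxA hu1 mulmx1. Qed.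

Lemma ad_inj x y : ad x = ad y -> x = y.
Proof. by move=> h; rewrite -(adK x) h adK. Qed.

Lemma ad_cent (A : set M) :
  [set ad x | x in centralizer A] = centralizer [set ad x | x in A].
Proof.
apply/seteqP; split => z.
  case=> x hx <- _ [a Aa <-]; by rewrite -!ad_mul hx.
move=> hz; exists (ad' z); last exact: ad'K.
move=> a Aa; apply: ad_inj.
rewrite [ad (a *m _)]ad_mul [ad (ad' z *m _)]ad_mul ad'K.
by apply: hz; exists a.
Qed.

End Ad.

Section AdUnits.
Variable C : numClosedFieldType.
Variables k l : nat.
Local Notation n := (k * l)%N.
Local Notation M := 'M[C]_n.
Variable u : M.
Hypotheses (hu1 : u *m adjmx u = 1%:M) (hu2 : adjmx u *m u = 1%:M).
Variable e : 'I_k -> 'I_k -> M.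
Hypothesis he : is_units e.

Lemma ad_units : is_units (fun i j => ad u (e i j)).
Proof.
case: he => eM e1 eA; split.
- move=> i j p q; rewrite -ad_mul // eM.
  by case: (j == p); rewrite // (lin0 (ad_lin u)).
- by rewrite -(lin_sum (ad_lin u)) e1 ad1.
- by move=> i j; rewrite -ad_adj eA.
Qed.

Lemma ad_span : [set ad u x | x in span e] = span (fun i j => ad u (e i j)).
Proof.
apply/seteqP; split => y.
  case=> x [c ->] <-; exists c; rewrite (lin_sum (ad_lin u)); apply: eq_bigr => i _.
  by rewrite (lin_sum (ad_lin u)); apply: eq_bigr => j _; rewrite (linZ (ad_lin u)).
case=> c ->; exists (\sum_i \sum_j c i j *: e i j); first by exists c.
rewrite (lin_sum (ad_lin u)); apply: eq_bigr => i _.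
by rewrite (lin_sum (ad_lin u)); apply: eq_bigr => j _; rewrite (linZ (ad_lin u)).
Qed.

End AdUnits.

Section Inner.
Variable C : numClosedFieldType.
Variable n : nat.
Hypothesis hn : (0 < n)%N.
Local Notation M := 'M[C]_n.

Lemma inner_aut (g : M -> M) : linear g ->
  (forall x y, g (x *m y) = g x *m g y) -> g 1%:M = 1%:M ->
  (forall x, g (adjmx x) = adjmx (g x)) ->
  exists u : M, [/\ u *m adjmx u = 1%:M, adjmx u *m u = 1%:M &
                    forall x, g x = u *m x *m adjmx u].
Proof.
move=> gl gM g1 gA.
pose f a b := g (delta_mx a b).
have fM : forall a b c d, f a b *m f c d = if b == c then f a d else 0.
  move=> a b c d; rewrite /f -gM mul_delta_mx_cond.
  by case: (b == c); rewrite ?mulr1n ?mulr0n // (lin0 gl).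
have fM' : forall m (X : 'M[C]_(m, n)) a b c d,
    X *m f a b *m f c d = if b == c then X *m f a d else 0.
  by move=> m X a b c d; rewrite -mulmxA fM ifmxr.
have fA : forall a b, adjmx (f a b) = f b a.
  by move=> a b; rewrite /f -gA adjmx_delta.
pose i0 : 'I_n := Ordinal hn.
have f00 : f i0 i0 != 0.
  apply/eqP => h0.
  have faa : forall a, f a a = 0.
    move=> a; have := fM a i0 i0 a; rewrite eqxx => <-.
    have := fM a i0 i0 i0; rewrite eqxx => <-.
    by rewrite h0 mulmx0 mul0mx.
  have : g 1%:M = 0.
    by rewrite mx1_sum_delta (lin_sum gl) big1 // => a _; exact: faa.
  rewrite g1 => /matrixP /(_ i0 i0); rewrite !mxE eqxx /= => /eqP.
  by rewrite oner_eq0.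
case: (pickP (fun rc : 'I_n * 'I_n => f i0 i0 rc.1 rc.2 != 0)) => [[r c] /= hrc|h]; last first.
  case/negP: f00; apply/eqP/matrixP => a b; rewrite mxE.
  by have := h (a, b); rewrite /= => /negbFE /eqP.
pose y := f i0 i0 *m delta_mx c (0 : 'I_1).
have yr : y r 0 = f i0 i0 r c by rewrite /y -colE mxE.
pose s := (adjmx y *m y) 0 0.
have sE : s = \sum_t (y t 0)^* * y t 0.
  by rewrite /s mxE; apply: eq_bigr => t _; rewrite adjmxE.
have s_ge0 : 0 <= s.
  by rewrite sE; apply: sumr_ge0 => t _; rewrite mulrC mul_conjC_ge0.
have s_neq0 : s != 0.
  apply/eqP => s0; move: sE; rewrite s0 => /esym h.
  have hge : forall t, predT t -> 0 <= (y t 0)^* * y t 0.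
    by move=> t _; rewrite mulrC mul_conjC_ge0.
  have := psumr_eq0P hge h (isT : predT r); rewrite mulrC => /eqP.
  by rewrite mul_conjC_eq0 yr (negbTE hrc).
pose t := sqrtC s.
have t_neq0 : t != 0 by rewrite sqrtC_eq0.
have t_conj : t^* = t by rewrite geC0_conj // sqrtC_ge0.
have ts : t * t = s by rewrite -expr2 sqrtCK.
pose v := t^-1 *: y.
have hyy : adjmx y *m y = s%:M by rewrite [LHS]mx11_scalar.
have hv : adjmx v *m v = 1%:M.
  rewrite /v adjmxZ fmorphV /= t_conj -scalemxAl -scalemxAr hyy scalerA scale_scalar_mx.
  by rewrite -ts mulrACA mulVf // mulr1.
have hfv : f i0 i0 *m v = v by rewrite /v -scalemxAr /y mulmxA fM eqxx.
pose u := \sum_a f a i0 *m v *m delta_mx (0 : 'I_1) a.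
have hadju : adjmx u = \sum_a delta_mx a 0 *m adjmx v *m f i0 a.
  rewrite /u adjmx_sum; apply: eq_bigr => a _.
  by rewrite !adjmxM adjmx_delta fA mulmxA.
have hu2 : adjmx u *m u = 1%:M.
  rewrite hadju mulmx_suml (eq_bigr (fun a : 'I_n => (delta_mx a 0 : 'M[C]_(n, 1)) *m delta_mx 0 a)) => [|a _].
    rewrite (eq_bigr (fun a : 'I_n => (delta_mx a a : 'M[C]_n))) => [|a _]; last by rewrite mul_delta_mx.
    by rewrite -mx1_sum_delta.
  rewrite mulmx_sumr (eq_bigr (fun b : 'I_n => if a == b then (delta_mx a 0 : 'M[C]_(n, 1)) *m delta_mx 0 a else 0)) => [|b _].
    by rewrite sum_if1'.
  rewrite !mulmxA fM' !ifmxl; case: eqP => [<-|] //.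
  by rewrite -(mulmxA _ (f i0 i0) v) hfv -(mulmxA _ (adjmx v) v) hv mulmx1.
have hu1 : u *m adjmx u = 1%:M by apply: mulmx1C.
have key : forall a b, u *m delta_mx a b = f a b *m u.
  move=> a b.
  rewrite mulmx_suml (eq_bigr (fun d : 'I_n => if d == a then f a i0 *m v *m delta_mx 0 b else 0)) => [|d _].
    rewrite sum_if1 mulmx_sumr.
    rewrite (eq_bigr (fun d : 'I_n => if b == d then f a i0 *m v *m delta_mx 0 d else 0)) => [|d _].
      by rewrite sum_if1'.
    by rewrite !mulmxA fM !ifmxl.
  rewrite -mulmxA mul_delta_mx_cond; case: eqP => [->|_]; rewrite ?mulr1n ?mulr0n ?mulmx0 //.
exists u; split => // x.
change (g x = ad u x).
rewrite (lin_expand gl x) (lin_expand (ad_lin u) x); apply: eq_bigr => Y _.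
by congr (_ *: _); rewrite /ad key -mulmxA hu1 mulmx1.
Qed.

End Inner.

Lemma star_iso_1 (C : numClosedFieldType) m p (A : set 'M[C]_m) (B : set 'M[C]_p) f :
  is_star_iso A B f -> A 1%:M -> B 1%:M -> f 1%:M = 1%:M.
Proof.
case=> [[_ _ fsurj] _ _ fM _] A1 B1.
have [a Aa fa] := fsurj _ B1.
by rewrite -fa -{1}(mul1mx a) fM // fa mulmx1.
Qed.

Section GmapDef.
Variable C : numClosedFieldType.
Variable n : nat.
Definition Gmap (P L M : 'M[C]_(n * n)) (x : 'M[C]_n) : 'M[C]_n :=
  n%:R *: \sum_a \sum_b app L (app P (delta_mx a b)) *m app M (adjmx (app P (delta_mx a b)) *m x).

Lemma Gmap_lin P L M : linear (Gmap P L M).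
Proof.
move=> c x y; rewrite /Gmap scalerA mulrC -scalerA -scalerDr; congr (_ *: _).
rewrite scaler_sumr -big_split /=; apply: eq_bigr => a _.
rewrite scaler_sumr -big_split /=; apply: eq_bigr => b _.
by rewrite mulmxDr -scalemxAr (app_lin M c) mulmxDr -scalemxAr.
Qed.
End GmapDef.

Section G0.
Variable C : numClosedFieldType.
Variables k l : nat.
Hypotheses (hk : (0 < k)%N) (hl : (0 < l)%N).
Local Notation n := (k * l)%N.
Local Notation M := 'M[C]_n.
Local Notation E := 'M[C]_(n * n).
Variable e : 'I_k -> 'I_k -> M.
Hypothesis he : is_units e.
Let eM : forall i j p q, e i j *m e p q = if j == p then e i q else 0.
Proof. by case: he. Qed.
Let e1 : \sum_i e i i = 1%:M.
Proof. by case: he. Qed.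
Let eA : forall i j, adjmx (e i j) = e j i.
Proof. by case: he. Qed.
Variable B : set M.
Variables L Mm : E.
Hypothesis hB1 : B 1%:M.
Hypothesis hL : is_star_iso (span e) B (app L).
Hypothesis hM : is_star_iso (centralizer (span e)) (centralizer B) (app Mm).
Hypothesis nM : forall x, app Mm x = app Mm (app (orth_proj (centralizer (span e))) x).

Local Notation lam := (app L).
Local Notation mu := (app Mm).

Let span1 : span e 1%:M.
Proof. by case: (iso_of_units hk hl he) => [[]]. Qed.

Lemma lam1 : lam 1%:M = 1%:M.
Proof. exact: star_iso_1 hL span1 hB1. Qed.

Lemma mu1 : mu 1%:M = 1%:M.
Proof.
by apply: star_iso_1 hM _ _ => x _; rewrite mulmx1 mul1mx.
Qed.

Lemma lamM a b : span e a -> span e b -> lam (a *m b) = lam a *m lam b.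
Proof. by case: hL => _ _ _ h _; apply: h. Qed.
Lemma lamA a : span e a -> lam (adjmx a) = adjmx (lam a).
Proof. by case: hL => _ _ _ _ h; apply: h. Qed.
Lemma muM a b : centralizer (span e) a -> centralizer (span e) b -> mu (a *m b) = mu a *m mu b.
Proof. by case: hM => _ _ _ h _; apply: h. Qed.
Lemma muA a : centralizer (span e) a -> mu (adjmx a) = adjmx (mu a).
Proof. by case: hM => _ _ _ _ h; apply: h. Qed.

Lemma lam_mu_comm a z : span e a -> centralizer (span e) z -> lam a *m mu z = mu z *m lam a.
Proof.
move=> Sa Cz; case: hL => [[fL _ _] _ _ _ _]; case: hM => [[fM _ _] _ _ _ _].
by apply: (fM z Cz); apply: fL.
Qed.

Definition g0 (x : M) : M := \sum_i \sum_j lam (e i j) *m mu (xc e i j x).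

Lemma g0_lin : linear g0.
Proof.
move=> c x y; rewrite /g0 scaler_sumr -big_split /=; apply: eq_bigr => i _.
rewrite scaler_sumr -big_split /=; apply: eq_bigr => j _.
by rewrite (xc_lin _ _ _ c) (app_lin Mm c) mulmxDr -scalemxAr.
Qed.

Lemma g0_mul x y : g0 (x *m y) = g0 x *m g0 y.
Proof.
have T : forall i j p q, lam (e i j) *m mu (xc e i j x) *m (lam (e p q) *m mu (xc e p q y)) =
    if j == p then lam (e i q) *m mu (xc e i j x *m xc e p q y) else 0.
  move=> i j p q.
  rewrite -mulmxA [mu (xc e i j x) *m _]mulmxA.
  rewrite -(lam_mu_comm (span_e e p q) (xc_cent eM i j x)).
  rewrite !mulmxA -(lamM (span_e e i j) (span_e e p q)) -mulmxA.
  rewrite -(muM (xc_cent eM i j x) (xc_cent eM p q y)) eM.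
  by case: (j == p); rewrite // (lin0 (app_lin L)) mul0mx.
have R : g0 x *m g0 y = \sum_i \sum_j \sum_q lam (e i q) *m mu (xc e i j x *m xc e j q y).
  rewrite /g0 mulmx_suml; apply: eq_bigr => i _.
  rewrite mulmx_suml; apply: eq_bigr => j _.
  rewrite mulmx_sumr.
  rewrite (eq_bigr (fun p => \sum_q if j == p then lam (e i q) *m mu (xc e i j x *m xc e p q y) else 0)).
    by rewrite sum2_ifl'.
  by move=> p _; rewrite mulmx_sumr; apply: eq_bigr => q _; rewrite T.
rewrite R /g0; apply: eq_bigr => i _; rewrite exchange_big; apply: eq_bigr => q _.
by rewrite (xc_mul eM e1) (lin_sum (app_lin Mm)) mulmx_sumr.
Qed.

Lemma g0_adj x : g0 (adjmx x) = adjmx (g0 x).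
Proof.
rewrite /g0 adjmx_sum exchange_big; apply: eq_bigr => j _.
rewrite adjmx_sum; apply: eq_bigr => i _.
rewrite adjmxM -(muA (xc_cent eM j i x)) -(lamA (span_e e j i)) -(xc_adj eA i j x) eA.
have Cz : centralizer (span e) (xc e i j (adjmx x)) by exact: xc_cent.
by rewrite (lam_mu_comm (span_e e i j) Cz).
Qed.

Lemma g0_cent z : centralizer (span e) z -> g0 z = mu z.
Proof.
move=> Cz; rewrite /g0.
rewrite (eq_bigr (fun i => lam (e i i) *m mu z)) => [|i _].
  by rewrite -mulmx_suml -(lin_sum (app_lin L)) e1 lam1 mul1mx.
rewrite (eq_bigr (fun j => if i == j then lam (e i j) *m mu z else 0)) => [|j _].
  by rewrite sum_if1'.
rewrite (xc_cent_elem eM e1 i j Cz).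
by case: (i == j); rewrite // (lin0 (app_lin Mm)) mulmx0.
Qed.

Lemma g0_1 : g0 1%:M = 1%:M.
Proof.
have C1 : centralizer (span e) 1%:M by move=> y _; rewrite mulmx1 mul1mx.
by rewrite (g0_cent C1) mu1.
Qed.

Lemma g0_e p q : g0 (e p q) = lam (e p q).
Proof.
rewrite /g0 (eq_bigr (fun i => \sum_j if i == p then if j == q then lam (e i j) else 0 else 0)).
  by rewrite sum2_if.
move=> i _; apply: eq_bigr => j _; rewrite (xc_e eM e1).
case: (i == p); case: (j == q); rewrite /= ?mu1 ?mulmx1 //.
  by rewrite (lin0 (app_lin Mm)) mulmx0.
all: by rewrite (lin0 (app_lin Mm)) mulmx0.
Qed.

Lemma g0_span a : span e a -> g0 a = lam a.
Proof.
case=> c ->; rewrite (lin_sum g0_lin) (lin_sum (app_lin L)); apply: eq_bigr => i _.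
rewrite (lin_sum g0_lin) (lin_sum (app_lin L)); apply: eq_bigr => j _.
by rewrite (linZ g0_lin) (linZ (app_lin L)) g0_e.
Qed.

Lemma Gmap_eq x : Gmap (orth_proj (span e)) L Mm x = g0 x.
Proof.
rewrite /Gmap (orth_proj_span hk hl eM e1 eA).
have hP : forall y, app (Mat (PA e)) y = PA e y by apply: app_Mat; exact: PA_lin.
under eq_bigr do under eq_bigr do rewrite hP.
pose F := fun y z : M => lam y *m mu (z *m x).
have F1 : forall z, linear (F ^~ z).
  by move=> z c a b; rewrite /F (app_lin L c) mulmxDl -scalemxAl.
have F2 : forall y, linear (F y).
  by move=> y c a b; rewrite /F mulmxDl -scalemxAl (app_lin Mm c) mulmxDr -scalemxAr.
have hS := S_identity hk hl eM e1 eA F1 F2.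
have -> : \sum_a \sum_b lam (PA e (delta_mx a b)) *m mu (adjmx (PA e (delta_mx a b)) *m x) =
    l%:R^-1 *: \sum_i \sum_j lam (e i j) *m mu (e j i *m x).
  by rewrite [in RHS]hS scalerA mulVf ?scale1r // lnz.
rewrite scalerA natrM mulfK ?lnz // /g0 scaler_sumr; apply: eq_bigr => i _.
rewrite scaler_sumr; apply: eq_bigr => j _.
rewrite nM (orth_proj_cent hk eM e1 eA) app_Mat; last exact: EA_lin.
by rewrite (EA_e eM) (linZ (app_lin Mm)) -scalemxAr scalerA mulfV ?scale1r // knz.
Qed.

Lemma g0_inner : exists u : M, [/\ u *m adjmx u = 1%:M, adjmx u *m u = 1%:M &
                    forall x, g0 x = u *m x *m adjmx u].
Proof.
apply: inner_aut; rewrite ?muln_gt0 ?hk ?hl //.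
- exact: g0_lin.
- exact: g0_mul.
- exact: g0_1.
- exact: g0_adj.
Qed.

End G0.

Section Proj.
Variable C : numClosedFieldType.
Variables k l : nat.
Hypotheses (hk : (0 < k)%N) (hl : (0 < l)%N).
Local Notation n := (k * l)%N.
Local Notation M := 'M[C]_n.
Variable e : 'I_k -> 'I_k -> M.
Hypothesis he : is_units e.

Lemma proj_span_spec : is_orth_proj (span e) (orth_proj (span e)).
Proof. by case: he => eM e1 eA; rewrite (orth_proj_span hk hl eM e1 eA); exact: PA_orth. Qed.

Lemma proj_cent_spec : is_orth_proj (centralizer (span e)) (orth_proj (centralizer (span e))).
Proof. by case: he => eM e1 eA; rewrite (orth_proj_cent hk eM e1 eA); exact: EA_orth. Qed.

Lemma proj_span_id y : span e y -> app (orth_proj (span e)) y = y.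
Proof. exact: orth_proj_id (span_subspace e) proj_span_spec. Qed.

Lemma proj_span_in x : span e (app (orth_proj (span e)) x).
Proof. by case: proj_span_spec => h _; apply: h. Qed.

Lemma proj_cent_id y : centralizer (span e) y -> app (orth_proj (centralizer (span e))) y = y.
Proof. exact: orth_proj_id (centralizer_subspace _) proj_cent_spec. Qed.

Lemma proj_cent_in x : centralizer (span e) (app (orth_proj (centralizer (span e))) x).
Proof. by case: proj_cent_spec => h _; apply: h. Qed.

Lemma span_closed : [/\ span e 1%:M, (forall x y, span e x -> span e y -> span e (x + y)),
      (forall (c : C) x, span e x -> span e (c *: x)),
      (forall x y, span e x -> span e y -> span e (x *m y)) &
      (forall x, span e x -> span e (adjmx x))].
Proof. by case: (iso_of_units hk hl he) => h _; exact: h. Qed.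

End Proj.

Section StarIsoAd.
Variable C : numClosedFieldType.
Variable n : nat.
Local Notation M := 'M[C]_n.

Definition closed_alg (A : set M) := [/\ (forall x y, A x -> A y -> A (x + y)),
      (forall (c : C) x, A x -> A (c *: x)),
      (forall x y, A x -> A y -> A (x *m y)) &
      (forall x, A x -> A (adjmx x))].

Lemma cent_closed (A : set M) : (forall x, A x -> A (adjmx x)) -> closed_alg (centralizer A).
Proof.
move=> hA; split.
- by move=> x y hx hy z Az; rewrite mulmxDr mulmxDl hx // hy.
- by move=> c x hx z Az; rewrite -scalemxAr -scalemxAl hx.
- by move=> x y hx hy z Az; rewrite mulmxA hx // -!mulmxA hy.
- move=> x hx z Az; apply: (can_inj (@adjmxK _ _ _)).
  by rewrite !adjmxM adjmxK (hx _ (hA _ Az)).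
Qed.

Variable u : M.
Hypotheses (hu1 : u *m adjmx u = 1%:M) (hu2 : adjmx u *m u = 1%:M).

Lemma star_iso_ad (A : set M) f : closed_alg A -> (forall a, A a -> f a = ad u a) ->
  is_star_iso A [set ad u x | x in A] f.
Proof.
case=> AD AZ AM AA hf; split.
- split.
  + by move=> a Aa; exists a => //; rewrite hf.
  + move=> a b /[!inE] Aa Ab; rewrite !hf // => /(ad_inj hu2); done.
  + by move=> _ [a Aa <-]; exists a => //; rewrite hf.
- move=> x y Ax Ay; rewrite (hf _ (AD _ _ Ax Ay)) (hf _ Ax) (hf _ Ay).
  exact: (linD (ad_lin u)).
- move=> c x Ax; rewrite (hf _ (AZ c _ Ax)) (hf _ Ax).
  exact: (linZ (ad_lin u)).
- move=> x y Ax Ay; rewrite (hf _ (AM _ _ Ax Ay)) (hf _ Ax) (hf _ Ay).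
  exact: (ad_mul hu2).
- move=> x Ax; rewrite (hf _ (AA _ Ax)) (hf _ Ax).
  exact: ad_adj.
Qed.
End StarIsoAd.

Section MainAlg.
Variable R : realType.
Variables k l : nat.
Hypotheses (hk : (0 < k)%N) (hl : (0 < l)%N).
Local Notation C := (Cx R).
Local Notation n := (k * l)%N.
Local Notation M := 'M[C]_n.
Local Notation E := 'M[C]_(n * n).

Lemma Gr_iff (A : set M) : Gr R k l A <-> exists e, is_units e /\ A = span e.
Proof. exact: (GrC_iff hk hl A). Qed.

Lemma PU_ad g : PU R n g -> exists u : M, [/\ u *m adjmx u = 1%:M, adjmx u *m u = 1%:M & app g = ad u].
Proof. by case=> u [h1 h2 h3]; exists u; split => //; apply: funext => x; rewrite h3. Qed.

Lemma pu_act_ad g u (A : set M) : app g = ad u -> pu_act g A = [set ad u x | x in A].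
Proof. by rewrite /pu_act => ->. Qed.

Definition Phi (p : E * Obj R n) : MorT R n :=
  (p.2, pu_act p.1 p.2, orth_proj (p.2 : set M) *m p.1, orth_proj (centralizer (p.2 : set M)) *m p.1).

Definition Psi (m : MorT R n) : E * Obj R n :=
  (Mat (Gmap (orth_proj (m.1.1.1 : set M)) m.1.2 m.2), m.1.1.1).

Lemma Phi_hat g A : PU R n g -> Gr R k l A -> HatMor R k l (Phi (g, A)).
Proof.
move=> /PU_ad [u [hu1 hu2 hg]] /Gr_iff [e [he ->]].
have he' := ad_units hu1 hu2 he.
have [S1 SD SZ SM SA] := span_closed hk hl he.
rewrite /HatMor /Phi /=; split.
- by apply/Gr_iff; exists e.
- by apply/Gr_iff; exists (fun i j => ad u (e i j)); split => //; rewrite (pu_act_ad _ hg) ad_span.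
- rewrite (pu_act_ad _ hg); apply: (star_iso_ad hu2); first by split.
  by move=> a Sa; rewrite app_mul (proj_span_id hk hl he Sa) hg.
- rewrite (pu_act_ad _ hg) -(ad_cent hu1 hu2); apply: (star_iso_ad hu2).
    exact: cent_closed.
  by move=> a Ca; rewrite app_mul (proj_cent_id hk he Ca) hg.
- split => x; rewrite !app_mul.
    by rewrite (proj_span_id hk hl he (proj_span_in hk hl he x)).
  by rewrite (proj_cent_id hk he (proj_cent_in hk he x)).
Qed.


Lemma Psi_Phi g A : PU R n g -> Gr R k l A -> Psi (Phi (g, A)) = (g, A).
Proof.
move=> hg hA; have H := Phi_hat hg hA.
move: hg hA => /PU_ad [u [hu1 hu2 eg]] /Gr_iff [e [he eAe]].
rewrite /Psi /=; congr pair; apply: app_inj => x.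
rewrite app_Mat; last exact: Gmap_lin.
move: H; rewrite /HatMor /Phi /= => -[_ hGrB hL hM [_ nM]].
have hB1 : (pu_act g A : set M) 1%:M by case: hGrB => [[]].
rewrite eAe in hL hM nM *.
rewrite (Gmap_eq hk hl he _ nM) /g0.
have T : forall i j, app (orth_proj (span e) *m g) (e i j) *m
    app (orth_proj (centralizer (span e)) *m g) (xc e i j x) = ad u (e i j *m xc e i j x).
  move=> i j; rewrite !app_mul (proj_span_id hk hl he (span_e e i j)).
  by rewrite (proj_cent_id hk he (xc_cent (let: And3 a _ _ := he in a) i j x)) eg (ad_mul hu2).
under eq_bigr do under eq_bigr do rewrite T.
under eq_bigr do rewrite -(lin_sum (ad_lin u)).
by rewrite -(lin_sum (ad_lin u)) (decomp (let: And3 a _ _ := he in a) (let: And3 _ b _ := he in b)) eg.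
Qed.

Lemma Psi_in m : HatMor R k l m -> PU R n (Psi m).1 /\ Gr R k l (Psi m).2.
Proof.
case: m => [[[A B] L Mm]] /= [hA hB hL hM [nL nM]]; split => //.
move: hA => /Gr_iff [e [he eAe]].
have hB1 : (B : set M) 1%:M by case: hB => [[]].
rewrite eAe in hL hM nM *.
have [u [hu1 hu2 hg]] := g0_inner hk hl he hB1 hL hM.
exists u; split => // x.
rewrite app_Mat; last exact: Gmap_lin.
by rewrite (Gmap_eq hk hl he _ nM) hg.
Qed.

Lemma Phi_Psi m : HatMor R k l m -> Phi (Psi m) = m.
Proof.
case: m => [[[A B] L Mm]] /= [hA hB hL hM [nL nM]].
move: hA => /Gr_iff [e [he eAe]].
have hB1 : (B : set M) 1%:M by case: hB => [[]].
rewrite eAe in hL hM nL nM *.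
have hG : forall x, app (Mat (Gmap (orth_proj (span e)) L Mm)) x = g0 e L Mm x.
  move=> x; rewrite app_Mat; last exact: Gmap_lin.
  exact: (Gmap_eq hk hl he _ nM).
rewrite /Phi /Psi /=; congr (_, _, _, _).
- rewrite /pu_act; apply/seteqP; split => y.
    case=> a Sa <-; rewrite hG (g0_span he _ hM Sa).
    by case: hL => [[hf _ _] _ _ _ _]; apply: hf.
  case: hL => [[_ _ hs] _ _ _ _] => /hs [a Sa <-]; exists a => //.
  by rewrite hG (g0_span he _ hM Sa).
- apply: app_inj => x; rewrite app_mul hG.
  by rewrite (g0_span he _ hM (proj_span_in hk hl he x)) -nL.
- apply: app_inj => x; rewrite app_mul hG.
  by rewrite (g0_cent hk hl he _ hB1 hL (proj_cent_in hk he x)) -nM.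
Qed.

Lemma Phi_comp g h A : PU R n g -> PU R n h -> Gr R k l A ->
  Phi (pu_mul g h, A) = hat_comp (Phi (g, pu_act h A)) (Phi (h, A)).
Proof.
move=> hg /PU_ad [u [hu1 hu2 eh]] /Gr_iff [e [he ->]].
have he' := ad_units hu1 hu2 he.
have hB : pu_act h (span e) = span (fun i j => ad u (e i j)) by rewrite (pu_act_ad _ eh) ad_span.
rewrite /Phi /hat_comp /mor_src /mor_tgt /pu_mul /=; congr (_, _, _, _).
- rewrite /pu_act image_comp.
  have -> : app (h *m g) = app g \o app h by apply: funext => x; rewrite app_mul.
  by [].
- apply: app_inj => x; rewrite !app_mul hB (proj_span_id hk hl he') //.
  by rewrite -ad_span eh; exists (app (orth_proj (span e)) x) => //; exact: proj_span_in.
- apply: app_inj => x; rewrite !app_mul hB (proj_cent_id hk he') //.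
  rewrite -ad_span -(ad_cent hu1 hu2) eh.
  by exists (app (orth_proj (centralizer (span e))) x) => //; exact: proj_cent_in.
Qed.

End MainAlg.

Section Lim.
Variable C : numClosedFieldType.
Variable T : Type.
Variable F : set_system T.
Hypothesis FF : Filter F.

Lemma cvg_mxP m n (f : T -> 'M[C]_(m, n)) (A : 'M[C]_(m, n)) :
  f @ F --> A <-> forall i j, (fun t => f t i j) @ F --> A i j.
Proof.
split.
  move=> h i j B /= hB.
  have : nbhs A [set N : 'M[C]_(m, n) | B (N i j)].
    exists (fun i' j' => if (i' == i) && (j' == j) then B else setT).
      by move=> i' j'; case: ifP => [/andP [/eqP -> /eqP ->] //|_]; exact: filterT.
    by move=> N /(_ i j); rewrite !eqxx.
  by move/h.
move=> h B [P hP sPB] /=.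
have : \forall t \near F, forall ij : 'I_m * 'I_n, P ij.1 ij.2 (f t ij.1 ij.2).
  apply: filter_forall => ij; exact: (h ij.1 ij.2 _ (hP ij.1 ij.2)).
by apply: filterS => t ht; apply: sPB => i j; exact: (ht (i, j)).
Qed.


Lemma cvg_conj (f : T -> C) (a : C) : f @ F --> a -> (fun t => (f t)^*) @ F --> a^*.
Proof.
move=> /cvgrPdist_lt h; apply/cvgrPdist_lt => eps /h.
by apply: filterS => t; rewrite -rmorphB /= norm_conjC.
Qed.

Lemma cvg_sum (V : normedModType C) (I : Type) (r : seq I) (P : pred I)
    (f : I -> T -> V) (a : I -> V) :
  (forall i, P i -> f i @ F --> a i) ->
  (fun t => \sum_(i <- r | P i) f i t) @ F --> \sum_(i <- r | P i) a i.
Proof.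
move=> h; elim: r => [|x r IH].
  by under eq_fun do rewrite big_nil; rewrite big_nil; exact: cvg_cst.
under eq_fun do rewrite big_cons; rewrite big_cons.
case: (P x) (h x) => hx; last exact: IH.
exact (cvgD (hx isT) IH).
Qed.

Lemma cvg_mulmx m n p (f : T -> 'M[C]_(m, n)) (g : T -> 'M[C]_(n, p)) (A : 'M[C]_(m, n)) (B : 'M[C]_(n, p)) :
  f @ F --> A -> g @ F --> B -> (fun t => f t *m g t) @ F --> A *m B.
Proof.
move=> /cvg_mxP hf /cvg_mxP hg; apply/cvg_mxP => i j.
under eq_fun do rewrite mxE; rewrite mxE.
by apply: cvg_sum => s _; apply: cvgM; [exact: hf|exact: hg].
Qed.

Lemma cvg_adjmx m n (f : T -> 'M[C]_(m, n)) (A : 'M[C]_(m, n)) :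
  f @ F --> A -> (fun t => adjmx (f t)) @ F --> adjmx A.
Proof.
move=> /cvg_mxP hf; apply/cvg_mxP => i j.
under eq_fun do rewrite adjmxE; rewrite adjmxE.
exact: cvg_conj.
Qed.

Lemma cvg_mxvec m n (f : T -> 'M[C]_(m, n)) (A : 'M[C]_(m, n)) :
  f @ F --> A -> (fun t => mxvec (f t)) @ F --> mxvec A.
Proof.
move=> /cvg_mxP hf; apply/cvg_mxP => i j.
rewrite (ord1 i); case: (mxvec_indexP j) => a b.
under eq_fun do rewrite mxvecE; rewrite mxvecE.
exact: hf.
Qed.

Lemma cvg_vec_mx m n (f : T -> 'rV[C]_(m * n)) (A : 'rV[C]_(m * n)) :
  f @ F --> A -> (fun t => vec_mx (f t)) @ F --> (vec_mx A : 'M_(m, n)).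
Proof.
move=> /cvg_mxP hf; apply/cvg_mxP => i j.
under eq_fun do rewrite mxE; rewrite mxE.
exact: hf.
Qed.

Lemma cvg_app n (P : T -> 'M[C]_(n * n)) (x : T -> 'M[C]_n) (P0 : 'M[C]_(n * n)) (x0 : 'M[C]_n) :
  P @ F --> P0 -> x @ F --> x0 -> (fun t => app (P t) (x t)) @ F --> app P0 x0.
Proof.
move=> hP hx; apply: cvg_vec_mx; apply: cvg_mulmx => //; exact: cvg_mxvec.
Qed.

Lemma cvg_scalec (V : normedModType C) (c : C) (f : T -> V) (a : V) :
  f @ F --> a -> (fun t => c *: f t) @ F --> c *: a.
Proof. by move=> h; apply: cvgZ => //; exact: cvg_cst. Qed.

Lemma cvg_Mat n (h : T -> 'M[C]_n -> 'M[C]_n) (h0 : 'M[C]_n -> 'M[C]_n) :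
  (forall y, (fun t => h t y) @ F --> h0 y) -> (fun t => Mat (h t)) @ F --> Mat h0.
Proof.
move=> hh; apply/cvg_mxP => i j.
rewrite /Mat /lin_mx; under eq_fun do rewrite mxE; rewrite mxE /=.
have := cvg_mxvec (hh (vec_mx (delta_mx 0 i))) => /cvg_mxP; exact.
Qed.

Lemma cvg_tr n (f : T -> 'M[C]_n) (A : 'M[C]_n) : f @ F --> A -> (fun t => \tr (f t)) @ F --> \tr A.
Proof.
move=> /cvg_mxP hf; rewrite /mxtrace; apply: cvg_sum => i _; exact: hf.
Qed.

End Lim.

Section Formulas.
Variable C : numClosedFieldType.
Variables k l : nat.
Hypotheses (hk : (0 < k)%N) (hl : (0 < l)%N).
Local Notation n := (k * l)%N.
Local Notation M := 'M[C]_n.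
Local Notation E := 'M[C]_(n * n).

Definition Qfun (P : E) (x : M) : M :=
  (l%:R / k%:R) *: \sum_a \sum_b app P (delta_mx a b) *m x *m adjmx (app P (delta_mx a b)).

Lemma Qfun_lin P : linear (Qfun P).
Proof.
move=> c x y; rewrite /Qfun.
pose S := fun x : M => \sum_a \sum_b app P (delta_mx a b) *m x *m adjmx (app P (delta_mx a b)).
change ((l%:R / k%:R) *: S (c *: x + y) = c *: ((l%:R / k%:R) *: S x) + (l%:R / k%:R) *: S y).
have -> : S (c *: x + y) = c *: S x + S y.
  rewrite /S scaler_sumr -big_split /=; apply: eq_bigr => a _.
  rewrite scaler_sumr -big_split /=; apply: eq_bigr => b _.
  by rewrite mulmxDr mulmxDl -scalemxAr -scalemxAl.
by rewrite scalerDr !scalerA mulrC.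
Qed.

Definition Qf (P : E) : E := Mat (Qfun P).

Definition Tfun (G P : E) (x : M) : M :=
  \sum_a \sum_b \tr (app G (adjmx (app P (delta_mx a b))) *m x) *: app G (app P (delta_mx a b)).

Lemma Tfun_lin G P : linear (Tfun G P).
Proof.
move=> c x y; rewrite /Tfun scaler_sumr -big_split /=; apply: eq_bigr => a _.
rewrite scaler_sumr -big_split /=; apply: eq_bigr => b _.
by rewrite mulmxDr -scalemxAr mxtraceD mxtraceZ scalerDl scalerA.
Qed.

Definition Tf (G P : E) : E := Mat (Tfun G P).

Variable e : 'I_k -> 'I_k -> M.
Hypothesis he : is_units e.

Lemma Qf_eq : orth_proj (centralizer (span e)) = Qf (orth_proj (span e)).
Proof.
case: he => eM e1 eA.
rewrite (orth_proj_cent hk eM e1 eA) (orth_proj_span hk hl eM e1 eA).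
apply: app_inj => x; rewrite /Qf app_Mat; last exact: EA_lin.
rewrite app_Mat; last exact: Qfun_lin.
have hP : forall y, app (Mat (PA e)) y = PA e y by apply: app_Mat; exact: PA_lin.
rewrite /Qfun; under eq_bigr do under eq_bigr do rewrite hP.
pose F := fun y z : M => y *m x *m z.
have F1 : forall z, linear (F ^~ z).
  by move=> z c a b; rewrite /F !mulmxDl -!scalemxAl.
have F2 : forall y, linear (F y).
  by move=> y c a b; rewrite /F mulmxDr -scalemxAr.
have hS := S_identity hk hl eM e1 eA F1 F2.
rewrite /EA hS /F scalerA; congr (_ *: _).
by rewrite mulrC.
Qed.

Variable u : M.
Hypotheses (hu1 : u *m adjmx u = 1%:M) (hu2 : adjmx u *m u = 1%:M).
Variable G : E.
Hypothesis hG : app G = ad u.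

Lemma Tf_eq : orth_proj [set ad u x | x in span e] = Tf G (orth_proj (span e)).
Proof.
have he' := ad_units hu1 hu2 he.
case: he' => eM' e1' eA'.
case: he => eM e1 eA.
rewrite ad_span (orth_proj_span hk hl eM' e1' eA') (orth_proj_span hk hl eM e1 eA).
apply: app_inj => x; rewrite /Tf app_Mat; last exact: PA_lin.
rewrite app_Mat; last exact: Tfun_lin.
have hP : forall y, app (Mat (PA e)) y = PA e y by apply: app_Mat; exact: PA_lin.
rewrite /Tfun; under eq_bigr do under eq_bigr do rewrite hP.
pose F := fun y z : M => \tr (app G z *m x) *: app G y.
have F1 : forall z, linear (F ^~ z).
  by move=> z c a b; rewrite /F (app_lin G c) scalerDr !scalerA mulrC.
have F2 : forall y, linear (F y).
  by move=> y c a b; rewrite /F (app_lin G c) mulmxDl -scalemxAl mxtraceD mxtraceZ scalerDl scalerA.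
have hS := S_identity hk hl eM e1 eA F1 F2.
have -> : \sum_a \sum_b F (PA e (delta_mx a b)) (adjmx (PA e (delta_mx a b))) =
    l%:R^-1 *: \sum_i \sum_j F (e i j) (e j i).
  by rewrite hS scalerA mulVf ?scale1r // lnz.
rewrite /PA; congr (_ *: _); apply: eq_bigr => i _; apply: eq_bigr => j _.
by rewrite /F /hs hG -ad_adj eA.
Qed.

End Formulas.

Section Cont.
Variable R : realType.
Variables k l : nat.
Hypotheses (hk : (0 < k)%N) (hl : (0 < l)%N).
Local Notation C := (Cx R).
Local Notation n := (k * l)%N.
Local Notation M := 'M[C]_n.
Local Notation E := 'M[C]_(n * n).

Section LimF.
Variable T : Type.
Variable F : set_system T.
Hypothesis FF : Filter F.

Lemma cvg_1 (X Y : topologicalType) (f : T -> X * Y) (p : X * Y) :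
  f @ F --> p -> (fun t => (f t).1) @ F --> p.1.
Proof. move=> h; exact: (continuous_cvg _ cvg_fst h). Qed.

Lemma cvg_2 (X Y : topologicalType) (f : T -> X * Y) (p : X * Y) :
  f @ F --> p -> (fun t => (f t).2) @ F --> p.2.
Proof. move=> h; exact: (continuous_cvg _ cvg_snd h). Qed.

Lemma cvg_pairP (U V : topologicalType) (f : T -> U) (g : T -> V) (a : U) (b : V) :
  f @ F --> a -> g @ F --> b -> (fun t => (f t, g t)) @ F --> (a, b).
Proof. move=> hf hg; exact: (@cvg_pair _ _ _ _ (nbhs a) (nbhs b) _ _ _ f g hf hg). Qed.

Lemma cvg_orth (f : T -> Obj R n) (A : Obj R n) :
  f @ F --> A -> (fun t => orth_proj (f t : set M)) @ F --> orth_proj (A : set M).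
Proof. move=> h; exact: (continuous_cvg _ (@initial_continuous _ _ _ A) h). Qed.

Lemma cvg_Gmap (P L Mm : T -> E) P0 L0 M0 :
  P @ F --> P0 -> L @ F --> L0 -> Mm @ F --> M0 ->
  (fun t => Mat (Gmap (P t) (L t) (Mm t))) @ F --> Mat (Gmap P0 L0 M0).
Proof.
move=> hP hL hM; apply: cvg_Mat => y; rewrite /Gmap; apply: cvg_scalec.
apply: cvg_sum => a _; apply: cvg_sum => b _; apply: cvg_mulmx.
  by apply: cvg_app => //; apply: cvg_app => //; exact: cvg_cst.
apply: cvg_app => //; apply: cvg_mulmx; last exact: cvg_cst.
by apply: cvg_adjmx; apply: cvg_app => //; exact: cvg_cst.
Qed.

Lemma cvg_Qf (P : T -> E) P0 : P @ F --> P0 -> (fun t => Qf (P t)) @ F --> Qf P0.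
Proof.
move=> hP; apply: cvg_Mat => y; rewrite /Qfun; apply: cvg_scalec.
apply: cvg_sum => a _; apply: cvg_sum => b _; apply: cvg_mulmx.
  by apply: cvg_mulmx; [apply: cvg_app => //; exact: cvg_cst|exact: cvg_cst].
by apply: cvg_adjmx; apply: cvg_app => //; exact: cvg_cst.
Qed.

Lemma cvg_Tf (G P : T -> E) G0 P0 : G @ F --> G0 -> P @ F --> P0 ->
  (fun t => Tf (G t) (P t)) @ F --> Tf G0 P0.
Proof.
move=> hG hP; apply: cvg_Mat => y; rewrite /Tfun.
apply: cvg_sum => a _; apply: cvg_sum => b _; apply: cvgZ.
  apply: cvg_tr; apply: cvg_mulmx; last exact: cvg_cst.
  by apply: cvg_app => //; apply: cvg_adjmx; apply: cvg_app => //; exact: cvg_cst.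
by apply: cvg_app => //; apply: cvg_app => //; exact: cvg_cst.
Qed.

End LimF.

Lemma Psi_cont : {within HatMor R k l, continuous (@Psi R k l)}.
Proof.
apply: continuous_subspaceT => m0; rewrite /Psi /continuous_at; apply: cvg_pairP.
  apply: cvg_Gmap.
  - by apply: cvg_orth; apply: cvg_1; apply: cvg_1; apply: cvg_1; exact: cvg_id.
  - by apply: cvg_2; apply: cvg_1; exact: cvg_id.
  - by apply: cvg_2; exact: cvg_id.
by apply: cvg_1; apply: cvg_1; apply: cvg_1; exact: cvg_id.
Qed.


Lemma Phi_cont : {within PU R n `*` Gr R k l, continuous (@Phi R k l)}.
Proof.
set D := PU R n `*` Gr R k l.
have h1 : {within D, continuous (fun p : E * Obj R n => p.2)}.
  by apply: continuous_subspaceT => p; apply: cvg_2; exact: cvg_id.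
have h3 : {within D, continuous (fun p : E * Obj R n => orth_proj (p.2 : set M) *m p.1)}.
  apply: continuous_subspaceT => p; apply: cvg_mulmx.
    by apply: cvg_orth; apply: cvg_2; exact: cvg_id.
  by apply: cvg_1; exact: cvg_id.
have h4 : {within D, continuous (fun p : E * Obj R n => orth_proj (centralizer (p.2 : set M)) *m p.1)}.
  apply: (@subspace_eq_continuous _ D _ (fun p : E * Obj R n => Qf (orth_proj (p.2 : set M)) *m p.1)).
    move=> [g A] /set_mem [/= hg /(Gr_iff hk hl) [e [he ->]]].
    by rewrite /from_subspace /= (Qf_eq hk hl he).
  apply: continuous_subspaceT => p; apply: cvg_mulmx.
    by apply: cvg_Qf; apply: cvg_orth; apply: cvg_2; exact: cvg_id.
  by apply: cvg_1; exact: cvg_id.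
have h2 : {within D, continuous (fun p : E * Obj R n => pu_act p.1 p.2)}.
  apply: (@continuous_comp_initial _ _ _ (@orth_proj C n)).
  apply: (@subspace_eq_continuous _ D _ (fun p : E * Obj R n => Tf p.1 (orth_proj (p.2 : set M)))).
    move=> [g A] /set_mem [/= /PU_ad [u [hu1 hu2 hg]] /(Gr_iff hk hl) [e [he ->]]].
    by rewrite /from_subspace /= (pu_act_ad _ hg) (Tf_eq hk hl he hu1 hu2 hg).
  apply: continuous_subspaceT => p; apply: cvg_Tf.
    by apply: cvg_1; exact: cvg_id.
  by apply: cvg_orth; apply: cvg_2; exact: cvg_id.
move=> x; rewrite /Phi /from_subspace.
apply: cvg_pairP; last exact: h4.
apply: cvg_pairP; last exact: h3.
apply: cvg_pairP; [exact: h1|exact: h2].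
Qed.

End Cont.

Unset Implicit Arguments.
Set Strict Implicit.
Set Printing Implicit Defensive.

(** hat-G_{k,l} is isomorphic (as a topological groupoid, identically on
    objects) to the action groupoid Gr_{k,l} x| PU(kl), whose morphism space
    is PU(kl) x Gr_{k,l} with s(g, a) = a, t(g, a) = g a and
    (g, h a) o (h, a) = (g h, a). *)
Theorem mainTheorem4 (R : realType) (k l : nat) (hk : (0 < k)%N) (hl : (0 < l)%N) :
  exists (Phi : 'M[Cx R]_((k * l) * (k * l)) * Obj R (k * l) -> MorT R (k * l))
         (Psi : MorT R (k * l) -> 'M[Cx R]_((k * l) * (k * l)) * Obj R (k * l)),
    [/\ [/\ set_fun (PU R (k * l) `*` Gr R k l) (HatMor R k l) Phi,
            set_fun (HatMor R k l) (PU R (k * l) `*` Gr R k l) Psi,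
            (forall p, (PU R (k * l) `*` Gr R k l) p -> Psi (Phi p) = p) &
            (forall m, HatMor R k l m -> Phi (Psi m) = m)],
        {within PU R (k * l) `*` Gr R k l, continuous Phi},
        {within HatMor R k l, continuous Psi} &
        [/\ (forall g A, PU R (k * l) g -> Gr R k l A ->
               mor_src (Phi (g, A)) = A /\ mor_tgt (Phi (g, A)) = pu_act g A) &
            (forall g h A, PU R (k * l) g -> PU R (k * l) h -> Gr R k l A ->
               Phi (pu_mul g h, A) = hat_comp (Phi (g, pu_act h A)) (Phi (h, A)))]].
Proof.
exists (@Phi R k l), (@Psi R k l).
split.
- split.
  + by move=> [g A] [/= hg hA]; exact: Phi_hat.
  + by move=> m hm; have [h1 h2] := Psi_in hk hl hm; split.
  + by move=> [g A] [/= hg hA]; exact: Psi_Phi.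
  + by move=> m hm; exact: Phi_Psi.
- exact: Phi_cont.
- exact: Psi_cont.
- split.
  + by [].
  + by move=> g h A hg hh hA; exact: Phi_comp.
Qed.
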